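(* Let $\mathcal S$ be a complete separable metric space, $\mu$ a boundedly finite Borel measure on $\mathcal S$, $m\ge2$ an integer and $a,\rho,k>0$. Let $N$ be a multivariate generalized Waring process with parameters $a,k,\rho$ and parameter measure $\mu$, and for $i\in\{1,\dots,m\}$ let $N_i(\cdot)=N(\cdot\times\{i\})$. Then: (1) for every $i$, $N_i$ is a generalized Waring process on $\mathcal S$ with parameters $a,k,\rho$ and parameter measure $\mu$; (2) for distinct indices $i_1,\dots,i_l\in\{1,\dots,m\}$, $\sum_{j=1}^lN_{i_j}$ is a generalized Waring process on $\mathcal S$ with parameters $a,\rho$, $k$ and parameter measure $l\mu$ (so that $\sum_j N_{i_j}(A)$ has the $\mathrm{GWD}(a,kl\mu(A);\rho)$ distribution for bounded Borel $A$); (3) for distinct indices $i_1,\dots,i_l\in\{1,\dots,m\}$, the process $(N_{i_1},\dots,N_{i_l})$ is a multivariate generalized Waring process (with $l$ components) with parameters $a,k,\rho$ and parameter measure $\mu$; in particular for all bounded Borel sets $A_1,\dots,A_l\subset\mathcal S$, $(N_{i_1}(A_1),\dots,N_{i_l}(A_l))$ has the $\mathrm{MGWD}(a;k\mu(A_1),\dots,k\mu(A_l);\rho)$ distribution; (4) for every $i$ and all bounded Borel sets $A,B\subset\mathcal S$, $(N_i(A),\sum_{j\ne i}N_j(B))$ has the $\mathrm{MGWD}(a;k\mu(A),(m-1)k\mu(B);\rho)$ (bivariate generalized Waring) distribution.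
   Context: For $x>0$, $\beta\ge0$ write $x_{(\beta)}=\Gamma(x+\beta)/\Gamma(x)$, with $0_{(0)}=1$ and $0_{(n)}=0$ for integers $n\ge1$. For $a,\rho>0$ and $k_1,\dots,k_s\ge 0$, $\mathrm{MGWD}(a;k_1,\dots,k_s;\rho)$ denotes the law on $\{0,1,2,\dots\}^s$ with $P(X_i=x_i,\ i=1,\dots,s)=\frac{\rho_{(\sum_i k_i)}\,a_{(\sum_i x_i)}}{(\rho+a)_{(\sum_i k_i+\sum_i x_i)}}\prod_{i=1}^s\frac{(k_i)_{(x_i)}}{x_i!}$; for $s=1$ it is $\mathrm{GWD}(a,k_1;\rho)$. A point process $N$ on a complete separable metric space $\mathcal S$ is a generalized Waring process with parameters $a,\rho,k>0$ and parameter measure $\mu$ (a boundedly finite Borel measure) if for every finite family of pairwise disjoint bounded Borel sets $A_1,\dots,A_l$, $(N(A_1),\dots,N(A_l))$ has the $\mathrm{MGWD}(a;k\mu(A_1),\dots,k\mu(A_l);\rho)$ distribution. Let $\nu$ be the Borel measure on $\mathcal S\times\{1,\dots,m\}$ given by $\nu(A\times C)=\mu(A)\cdot|C|$ for Borel $A\subset\mathcal S$ and $C\subset\{1,\dots,m\}$ (i.e. $\nu(A\times\{i\})=\mu(A)$). A multivariate generalized Waring process on $\mathcal S$ with parameters $a,k,\rho$ and parameter measure $\mu$ is a generalized Waring process on $\mathcal S\times\{1,\dots,m\}$ with parameters $a,k,\rho$ and parameter measure $\nu$. *)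

(* Defs.v *)
From HB Require Import structures.
From mathcomp Require Import all_boot all_order all_algebra.
From mathcomp Require Import all_classical all_reals all_analysis.
From mathcomp Require Import measurable_realfun.
Set Implicit Arguments. Unset Strict Implicit. Unset Printing Implicit Defensive.
Import Order.TTheory GRing.Theory Num.Theory.
Import numFieldNormedType.Exports.
Local Open Scope classical_set_scope.
Local Open Scope ring_scope.

Definition Gamma {R : realType} (x : R) : R :=
  fine (\int[@lebesgue_measure R]_(t in `]0%R, +oo[) (powR t (x - 1) * expR (- t))%:E)%E.

Definition poch {R : realType} (x b : R) : R :=
  if x == 0 then (if b == 0 then 1 else 0) else Gamma (x + b) / Gamma x.

Definition mgwd_pmf {R : realType} (s : nat) (a : R) (k : 'I_s -> R) (rho : R)
    (x : 'I_s -> nat) : R :=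
  let K := \sum_(i < s) k i in
  let X := (\sum_(i < s) x i)%N in
  poch rho K * poch a X%:R / poch (rho + a) (K + X%:R) *
  \prod_(i < s) (poch (k i) (x i)%:R / (x i)`!%:R).

Definition has_mgwd {R : realType} {d} {Omega : measurableType d}
    (P : probability Omega R) (s : nat) (Y : 'I_s -> Omega -> \bar R)
    (a : R) (k : 'I_s -> R) (rho : R) : Prop :=
  forall x : 'I_s -> nat,
    P [set w | forall i, Y i w = ((x i)%:R)%:E] = (mgwd_pmf a k rho x)%:E.

Definition borelType (S : ptopologicalType) := g_sigma_algebraType (@open S).

Definition mbounded {R : numDomainType} {S : pseudoMetricType R} (A : set S) : Prop :=
  A = set0 \/ exists (x : S) (r : R), A `<=` ball x r.

(* A point process on a space X with Borel sets [bor] and bounded sets [bdd]: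
   each realisation is a boundedly finite counting measure on [bor], and each
   count N(A) (A Borel) is a random variable. *)
Definition point_process {R : realType} {d} {Omega : measurableType d}
    (P : probability Omega R) {X : Type} (bor : set (set X)) (bdd : set X -> Prop)
    (N : Omega -> set X -> \bar R) : Prop :=
  (forall w, N w set0 = 0%E) /\
  (forall w A, bor A -> (exists n : nat, N w A = (n%:R)%:E) \/ N w A = +oo%E) /\
  (forall w A, bor A -> bdd A -> (N w A < +oo)%E) /\
  (forall w (F : nat -> set X), (forall n, bor (F n)) -> trivIset setT F ->
     ((fun n => \sum_(i < n) N w (F i)) @ \oo --> N w (\bigcup_n F n))%E) /\
  (forall A, bor A -> measurable_fun [set: Omega] (fun w => N w A)).

Definition gen_waring {R : realType} {d} {Omega : measurableType d}
    (P : probability Omega R) {X : Type} (bor : set (set X)) (bdd : set X -> Prop)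
    (a rho k : R) (nu : set X -> \bar R) (N : Omega -> set X -> \bar R) : Prop :=
  point_process P bor bdd N /\
  forall (l : nat) (A : 'I_l -> set X),
    (forall i, bor (A i) /\ bdd (A i)) ->
    (forall i j, i != j -> A i `&` A j = set0) ->
    has_mgwd P (fun i w => N w (A i)) a (fun i => k * fine (nu (A i))) rho.

Definition slice {S : Type} {m : nat} (B : set (S * 'I_m)) (i : 'I_m) : set S :=
  [set x | B (x, i)].

(* Borel sets of S x {1..m} (product of S with the finite discrete space) *)
Definition borel_prod (S : ptopologicalType) (m : nat) : set (set (S * 'I_m)) :=
  fun B => forall i, measurable (slice B i : set (borelType S)).

Definition bounded_prod {R : numDomainType} (S : pseudoMetricType R) (m : nat)
    (B : set (S * 'I_m)) : Prop := forall i, mbounded (slice B i).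

(* nu(B) = sum_i mu(B_i), i.e. the measure with nu(A x C) = mu(A) |C| *)
Definition nu_prod {R : realType} {S : Type} (m : nat) (mu : set S -> \bar R)
    (B : set (S * 'I_m)) : \bar R := (\sum_(i < m) mu (slice B i))%E.

Definition multi_gen_waring {R : realType} {d} {Omega : measurableType d}
    (P : probability Omega R) (S : completePseudoMetricType R) (m : nat)
    (a k rho : R) (mu : set S -> \bar R) (N : Omega -> set (S * 'I_m) -> \bar R) : Prop :=
  gen_waring P (@borel_prod S m) (@bounded_prod R S m) a rho k (@nu_prod R S m mu) N.

Definition comp_proc {R : realType} {Omega S : Type} {m : nat}
    (N : Omega -> set (S * 'I_m) -> \bar R) (i : 'I_m) : Omega -> set S -> \bar R :=
  fun w A => N w [set p | A p.1 /\ p.2 = i].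

(* Main.v *)
Require Import Defs.
From HB Require Import structures.
From mathcomp Require Import all_boot all_order all_algebra.
From mathcomp Require Import all_classical all_reals all_analysis.
From mathcomp Require Import measurable_realfun.
Import Order.TTheory GRing.Theory Num.Theory.
Local Open Scope classical_set_scope.
Local Open Scope ring_scope.


Lemma pp_fadd {R : realType} {d} {Omega : measurableType d}
    (P : probability Omega R) {X : Type} (bor : set (set X)) (bdd : set X -> Prop)
    (N : Omega -> set X -> \bar R) (n : nat) (G : 'I_n -> set X) (U : set X) w :
  point_process P bor bdd N -> bor set0 -> (forall i, bor (G i)) ->
  (forall i j, i != j -> G i `&` G j = set0) ->
  U = [set x | exists i, G i x] ->
  N w U = (\sum_(i < n) N w (G i))%E.
Proof.
move=> [h0 [_ [_ [hc _]]]] b0 hG hdis ->.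
pose F (t : nat) := match @insub _ (fun t => (t < n)%N) 'I_n t with Some i => G i | None => set0 end.
have FG (i : 'I_n) : F i = G i by rewrite /F valK.
have Fn t : (n <= t)%N -> F t = set0 by move=> ht; rewrite /F insubN // -leqNgt.
have hF t : bor (F t).
  case: (ltnP t n) => ht; last first.
  - by rewrite Fn.
  by have -> : t = Ordinal ht by []; rewrite FG.
have hU : [set x | exists i, G i x] = \bigcup_t F t.
  apply/seteqP; split => x /=.
  - by move=> [i Gi]; exists (val i) => //; rewrite FG.
  - move=> [t _]; case: (ltnP t n) => ht; last by rewrite Fn.
    by have -> : t = Ordinal ht by []; rewrite FG => ?; exists (Ordinal ht).
have tF : trivIset setT F.
  move=> i j _ _ [x [Fi Fj]].
  case: (ltnP i n) => hi; last by move: Fi; rewrite Fn.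
  case: (ltnP j n) => hj; last by move: Fj; rewrite Fn.
  move: Fi Fj; have -> : i = Ordinal hi by [].
  have -> : j = Ordinal hj by []. rewrite !FG => Fi Fj.
  case: (eqVneq (Ordinal hi) (Ordinal hj)) => [[]//|ne].
  have : (G (Ordinal hi) `&` G (Ordinal hj)) x by [].
  by rewrite hdis.
have := hc w F hF tF; rewrite -hU => Hc.
have Hc2 : ((fun t => \sum_(i < t) N w (F i)) @ \oo --> (\sum_(i < n) N w (G i)))%E.
  apply: cvg_near_cst.
  near=> t.
  have ht : (n <= t)%N by near: t; exists n.
  rewrite -(big_mkord xpredT (fun i => N w (F i))).
  rewrite (big_cat_nat (leq0n n) ht) /= big_mkord.
  have -> : (\sum_(n <= i < t) N w (F i))%E = 0%E.
    rewrite big_nat_cond big1 // => i /andP[/andP[hi _] _]; by rewrite Fn.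
  rewrite adde0.
  by apply: eq_bigr => i _; rewrite FG.
exact: (cvg_unique (@ereal_hausdorff R) Hc Hc2).
Unshelve. all: end_near.
Qed.


Lemma gw_transfer {R : realType} {d} {Omega : measurableType d}
    (P : probability Omega R) {X Y : Type} (bor : set (set X)) (bdd : set X -> Prop)
    (bor' : set (set Y)) (bdd' : set Y -> Prop)
    (a rho k : R) (nu : set X -> \bar R) (nu' : set Y -> \bar R)
    (N : Omega -> set X -> \bar R) (M : Omega -> set Y -> \bar R) (f : set Y -> set X) :
  gen_waring P bor bdd a rho k nu N ->
  (forall w A, bor' A -> M w A = N w (f A)) ->
  bor' set0 -> f set0 = set0 ->
  (forall A, bor' A -> bor (f A)) ->
  (forall A, bor' A -> bdd' A -> bdd (f A)) ->
  (forall A B, bor' A -> bor' B -> A `&` B = set0 -> f A `&` f B = set0) ->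
  (forall F : nat -> set Y, (forall n, bor' (F n)) ->
     bor' (\bigcup_n F n) /\ f (\bigcup_n F n) = \bigcup_n f (F n)) ->
  (forall A, bor' A -> bdd' A -> fine (nu (f A)) = fine (nu' A)) ->
  gen_waring P bor' bdd' a rho k nu' M.
Proof.
move=> [[h0 [h1 [h2 [h3 h4]]]] hg] hM b0 f0 hb hd hdis hU hnu.
split; first split.
  by move=> w; rewrite hM // f0.
split.
  by move=> w A bA; rewrite hM //; apply: h1; apply: hb.
split.
  by move=> w A bA dA; rewrite hM //; apply: h2; [apply: hb|apply: hd].
split.
  move=> w F bF tF; have [bU fU] := hU F bF.
  rewrite hM // fU.
  have -> : (fun n => \sum_(i < n) M w (F i))%E = (fun n => \sum_(i < n) N w (f (F i)))%E.
    by apply: funext => n; apply: eq_bigr => i _; rewrite hM.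
  apply: h3; first by move=> n; apply: hb.
  move=> i j _ _ [x [fi fj]].
  apply: (tF i j I I).
  apply/set0P/negP => /eqP E.
  have : (f (F i) `&` f (F j)) x by [].
  by rewrite hdis.
  by move=> A bA; rewrite (_ : (fun w => M w A) = (fun w => N w (f A))); [apply: h4; apply: hb|apply: funext => w; rewrite hM].
move=> l A hA hAd x.
rewrite /has_mgwd in hg.
have := hg l (fun i => f (A i)) _ _ x.
have -> : [set w | forall i, M w (A i) = ((x i)%:R)%:E] =
          [set w | forall i, N w (f (A i)) = ((x i)%:R)%:E].
  by apply/seteqP; split => w /= H i; rewrite -H hM //; case: (hA i).
have -> : (fun i => k * fine (nu' (A i))) = (fun i => k * fine (nu (f (A i)))).
  by apply: funext => i; case: (hA i) => ? ?; rewrite hnu.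
apply.
- by move=> i; case: (hA i) => ? ?; split; [apply: hb|apply: hd].
- by move=> i j ij; case: (hA i) => ? _; case: (hA j) => ? _; apply: hdis => //; apply: hAd.
Qed.


Section H.
Context (R : realType) (S : completePseudoMetricType R) (m : nat).

Lemma bp_of (B : set (S * 'I_m)) (A : set (borelType S)) :
  measurable A -> (forall j, slice B j = A \/ slice B j = set0) -> @borel_prod S m B.
Proof. by move=> mA h j; case: (h j) => ->. Qed.

Lemma bd_of (B : set (S * 'I_m)) (A : set S) :
  mbounded A -> (forall j, slice B j = A \/ slice B j = set0) -> @bounded_prod R S m B.
Proof. by move=> mA h j; case: (h j) => ->; last by left. Qed.

Lemma slice_sgl (A : set S) (i j : 'I_m) :
  slice [set p | A p.1 /\ p.2 = i] j = if j == i then A else set0.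
Proof.
rewrite /slice; case: eqP => [->|ne]; apply/seteqP; split => x /=.
- by case.
- by [].
- by case=> _ E; exact: ne.
- by [].
Qed.

Lemma slice_sgl' (A : set S) (i j : 'I_m) :
  slice [set p | A p.1 /\ p.2 = i] j = A \/ slice [set p | A p.1 /\ p.2 = i] j = set0.
Proof. by rewrite slice_sgl; case: eqP; [left|right]. Qed.

Lemma nu_sgl (mu : {measure set (borelType S) -> \bar R}) (A : set S) (i : 'I_m) :
  @nu_prod R S m mu [set p | A p.1 /\ p.2 = i] = mu A.
Proof.
rewrite /nu_prod (bigD1 i) //= big1 ?adde0.
  by rewrite slice_sgl eqxx.
by move=> j /negPf ji; rewrite slice_sgl ji measure0.
Qed.

End H.

Lemma nu_pred (R : realType) (S : completePseudoMetricType R) (m : nat)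
  (mu : {measure set (borelType S) -> \bar R}) (A : set S) (Cp : pred 'I_m) (r : R) :
  mu A = r%:E ->
  @nu_prod R S m mu [set p | A p.1 /\ Cp p.2] = ((#|Cp|)%:R * r)%:E.
Proof.
move=> hr; rewrite /nu_prod.
have sl j : slice [set p | A p.1 /\ Cp p.2] j = if Cp j then A else set0.
  rewrite /slice; case: (boolP (Cp j)) => hj; apply/seteqP; split => x /=;
   by [case|move=> ?; split|case=> _ H; move: hj; rewrite H].
have -> : (\sum_(j < m) mu (slice [set p | A p.1 /\ Cp p.2] j) =
          \sum_(j < m) (if Cp j then r else 0)%:E)%E.
  by apply: eq_bigr => j _; rewrite sl; case: (Cp j) => //; rewrite measure0.
rewrite sumEFin -big_mkcond /= sumr_const mulr_natl //.
Qed.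

Lemma slice_U (R : realType) (S : completePseudoMetricType R) (m : nat) (F : nat -> set (S * 'I_m)) j :
  slice (\bigcup_n F n) j = \bigcup_n slice (F n) j.
Proof. by apply/seteqP; split => x /=. Qed.


Theorem theorem11 (R : realType) (d : measure_display) (Omega : measurableType d)
  (P : probability Omega R)
  (S : completePseudoMetricType R)
  (S_metric : hausdorff_space S)
  (S_separable : exists D : set S, countable D /\ dense D)
  (mu : {measure set (borelType S) -> \bar R})
  (mu_bfin : forall A : set (borelType S), measurable A -> mbounded (A : set S) ->
     (mu A < +oo)%E)
  (m : nat) (hm : (2 <= m)%N) (a k rho : R) (ha : 0 < a) (hk : 0 < k) (hrho : 0 < rho)
  (N : Omega -> set (S * 'I_m) -> \bar R)
  (hN : multi_gen_waring P a k rho mu N) :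
  (forall i : 'I_m,
     gen_waring P (measurable : set (set (borelType S))) (@mbounded R S)
       a rho k mu (comp_proc N i)) /\
  (forall (l : nat) (idx : 'I_l -> 'I_m), injective idx ->
     gen_waring P (measurable : set (set (borelType S))) (@mbounded R S)
       a rho k (fun A => ((l%:R)%:E * mu A)%E)
       (fun w A => (\sum_(j < l) comp_proc N (idx j) w A)%E)) /\
  (forall (l : nat) (idx : 'I_l -> 'I_m), injective idx ->
     multi_gen_waring P a k rho mu
       (fun w B => N w [set p | exists j : 'I_l, B (p.1, j) /\ p.2 = idx j]) /\
     (forall A : 'I_l -> set (borelType S),
        (forall j, measurable (A j) /\ mbounded (A j : set S)) ->
        has_mgwd P (fun j w => comp_proc N (idx j) w (A j)) a
          (fun j => k * fine (mu (A j))) rho)) /\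
  (forall (i : 'I_m) (A B : set (borelType S)),
     measurable A -> mbounded (A : set S) -> measurable B -> mbounded (B : set S) ->
     has_mgwd P
       (fun (t : 'I_2) w => if t == ord0 then comp_proc N i w A
                            else (\sum_(j < m | j != i) comp_proc N j w B)%E)
       a
       (fun t : 'I_2 => if t == ord0 then k * fine (mu A)
                        else (m - 1)%:R * k * fine (mu B))
       rho).
Proof.
have hpp := hN.1.
have hg := hN.2.
have mfin (A : set (borelType S)) : measurable A -> mbounded (A : set S) ->
    mu A = (fine (mu A))%:E.
  by move=> mA bA; rewrite fineK // ge0_fin_numE ?measure_ge0 //; apply: mu_bfin.
have sl0 j : slice (set0 : set (S * 'I_m)) j = set0 by apply/seteqP; split.
have b0 : @borel_prod S m set0.
  by apply: (@bp_of R S m _ set0) => // j; rewrite sl0; right.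
have sgl_bor (A : set (borelType S)) i : measurable A ->
    @borel_prod S m [set p | A p.1 /\ p.2 = i].
  by move=> mA; apply: (@bp_of R S m _ A mA) => j; apply: slice_sgl'.
have sgl_bdd (A : set S) i : mbounded A ->
    @bounded_prod R S m [set p | A p.1 /\ p.2 = i].
  by move=> mA; apply: (@bd_of R S m _ A mA) => j; apply: slice_sgl'.
have pred_bor (A : set (borelType S)) (Cp : pred 'I_m) : measurable A ->
    @borel_prod S m [set p | A p.1 /\ Cp p.2].
  move=> mA; apply: (@bp_of R S m _ A mA) => j; rewrite /slice.
  case: (boolP (Cp j)) => hj; [left|right]; apply/seteqP; split => x /=;
   by [case|move=> ?; split|case=> _ H; move: hj; rewrite H].
have pred_bdd (A : set S) (Cp : pred 'I_m) : mbounded A ->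
    @bounded_prod R S m [set p | A p.1 /\ Cp p.2].
  move=> mA; apply: (@bd_of R S m _ A mA) => j; rewrite /slice.
  case: (boolP (Cp j)) => hj; [left|right]; apply/seteqP; split => x /=;
   by [case|move=> ?; split|case=> _ H; move: hj; rewrite H].
split.
  move=> i.
  apply: (@gw_transfer R d Omega P _ _ _ _ _ _ a rho k _ _ N _
            (fun A => [set p | A p.1 /\ p.2 = i]) hN) => //.
  - by apply/seteqP; split => p //= [].
  - by move=> A mA; apply: sgl_bor.
  - by move=> A mA bA; apply: sgl_bdd.
  - move=> A B _ _ AB; apply/seteqP; split => p //= [[Ap _] [Bp _]].
    by have : (A `&` B) p.1 by []; rewrite AB.
  - move=> F mF; split; first exact: bigcupT_measurable.
    apply/seteqP; split => p /=.
    + by move=> [[n _ Fp] E]; exists n.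
    + by move=> [n _ [Fp E]]; split => //; exists n.
  - by move=> A mA bA; rewrite nu_sgl.
split.
  move=> l idx inj.
  have Gdis (A : set S) (i j : 'I_l) : i != j ->
      [set p | A p.1 /\ p.2 = idx i] `&` [set p | A p.1 /\ p.2 = idx j] = set0.
    move=> ij; apply/seteqP; split => p //= [[_ E1] [_ E2]].
    by move: ij; rewrite (inj _ _ (etrans (esym E1) E2)) eqxx.
  apply: (@gw_transfer R d Omega P _ _ _ _ _ _ a rho k _ _ N _
            (fun A => [set p | A p.1 /\ p.2 \in codom idx]) hN) => //.
  - move=> w A mA.
    rewrite (@pp_fadd R d Omega P _ _ _ N l (fun j => [set p | A p.1 /\ p.2 = idx j])
               [set p | A p.1 /\ p.2 \in codom idx] w hpp b0) //.
    + by move=> j; apply: sgl_bor.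
    + by move=> i j ij; apply: Gdis.
    + apply/seteqP; split => p /=.
      * by move=> [Ap /codomP [j E]]; exists j.
      * by move=> [j [Ap E]]; split => //; apply/codomP; exists j.
  - by apply/seteqP; split => p //= [].
  - by move=> A mA; apply: pred_bor.
  - by move=> A mA bA; apply: pred_bdd.
  - move=> A B _ _ AB; apply/seteqP; split => p //= [[Ap _] [Bp _]].
    by have : (A `&` B) p.1 by []; rewrite AB.
  - move=> F mF; split; first exact: bigcupT_measurable.
    apply/seteqP; split => p /=.
    + by move=> [[n _ Fp] E]; exists n.
    + by move=> [n _ [Fp E]]; split => //; exists n.
  - move=> A mA bA.
    rewrite (@nu_pred R S m mu A (fun x => x \in codom idx) _ (mfin A mA bA)).
    rewrite (mfin A mA bA) /=.
    have -> : #|(fun x => x \in codom idx)| = l.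
      by rewrite -[RHS]card_ord -(card_codom inj); apply: eq_card.
    by [].
split.
  move=> l idx inj.
  pose g (B : set (S * 'I_l)) := [set p : S * 'I_m | exists j : 'I_l, B (p.1, j) /\ p.2 = idx j].
  have gsl B j0 : slice (g B) (idx j0) = slice B j0.
    apply/seteqP; split => x /=.
    + by move=> [j [Bj E]]; rewrite (inj _ _ E).
    + by move=> Bx; exists j0.
  have gsl0 B i : i \notin (idx @: setT)%SET -> slice (g B) i = set0.
    move=> hi; apply/seteqP; split => x //= [j [_ E]].
    by move: hi; rewrite (_ : i = idx j) // imset_f ?in_setT.
  split.
  - apply: (@gw_transfer R d Omega P _ _ _ _ _ _ a rho k _ _ N _ g hN) => //.
    + by move=> j; rewrite /slice /=; exact: measurable0.
    + by apply/seteqP; split => p //= [j []].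
    + move=> B hB i; case: (boolP (i \in (idx @: setT)%SET)) => [/imsetP [j _ ->]|hi].
      * by rewrite gsl; apply: hB.
      * by rewrite gsl0 //; exact: measurable0.
    + move=> B _ hB i; case: (boolP (i \in (idx @: setT)%SET)) => [/imsetP [j _ ->]|hi].
      * by rewrite gsl; apply: hB.
      * by rewrite gsl0 //; left.
    + move=> A B _ _ AB; apply/seteqP; split => p //= [[j [Aj E]] [j' [Bj' E']]].
      move: Bj'; rewrite -(inj _ _ (etrans (esym E) E')) => Bj.
      by have : (A `&` B) (p.1, j) by []; rewrite AB.
    + move=> F mF; split.
      * by move=> j; rewrite slice_U; apply: bigcupT_measurable => n; apply: mF.
      * apply/seteqP; split => p /=.
        -- by move=> [j [[n _ Fp] E]]; exists n => //; exists j.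
        -- by move=> [n _ [j [Fp E]]]; exists j; split => //; exists n.
    + move=> B _ _; congr fine.
      rewrite /nu_prod (bigID (fun i => i \in (idx @: setT)%SET)) /=.
      rewrite [X in (_ + X)%E]big1 ?adde0; last by move=> i hi; rewrite gsl0 // measure0.
      rewrite big_imset /=; last by move=> x y _ _; apply: inj.
      by apply: eq_big => [j|j _]; [rewrite in_setT|rewrite gsl].
  - move=> A hA x.
    have := hg l (fun j => [set p | A j p.1 /\ p.2 = idx j]) _ _ x.
    rewrite (_ : (fun j => k * fine (@nu_prod R S m mu [set p | A j p.1 /\ p.2 = idx j])) =
                 (fun j => k * fine (mu (A j)))); last first.
      by apply: funext => j; rewrite nu_sgl.
    apply.
    + by move=> j; case: (hA j) => ? ?; split; [apply: sgl_bor|apply: sgl_bdd].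
    + move=> i j ij; apply/seteqP; split => p //= [[_ E1] [_ E2]].
      by move: ij; rewrite (inj _ _ (etrans (esym E1) E2)) eqxx.
move=> i A B mA bA mB bB x.
have h0 := hpp.1.
pose G (t : 'I_2) := if t == ord0 then [set p : S * 'I_m | A p.1 /\ p.2 = i]
                     else [set p : S * 'I_m | B p.1 /\ p.2 != i].
have hX w (t : 'I_2) : (if t == ord0 then comp_proc N i w A
                        else (\sum_(j < m | j != i) comp_proc N j w B)%E) = N w (G t).
  rewrite /G; case: (t == ord0) => //.
  pose G' (j : 'I_m) := if j != i then [set p : S * 'I_m | B p.1 /\ p.2 = j] else set0.
  rewrite (@pp_fadd R d Omega P _ _ _ N m G' [set p | B p.1 /\ p.2 != i] w hpp b0).
  + rewrite big_mkcond; apply: eq_bigr => j _; rewrite /G'.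
    by case: (j != i) => //; rewrite h0.
  + by move=> j; rewrite /G'; case: (j != i) => //; apply: sgl_bor.
  + move=> j1 j2 j12; rewrite /G'.
    case: (j1 != i); case: (j2 != i); rewrite ?set0I ?setI0 //.
    apply/seteqP; split => p //= [[_ E1] [_ E2]].
    by move: j12; rewrite -E1 -E2 eqxx.
  + apply/seteqP; split => p /=.
    * move=> [Bp hp]; exists p.2; rewrite /G' hp; split => //.
    * move=> [j]; rewrite /G'; case: (boolP (j != i)) => // hj [Bp E].
      by split => //; rewrite E.
have := hg 2 G _ _ x.
rewrite (_ : (fun t => k * fine (@nu_prod R S m mu (G t))) =
             (fun t : 'I_2 => if t == ord0 then k * fine (mu A)
                        else (m - 1)%:R * k * fine (mu B))); last first.
  apply: funext => t; rewrite /G; case: (t == ord0); first by rewrite nu_sgl.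
  rewrite (@nu_pred R S m mu B (fun x => x != i) _ (mfin B mB bB)) /=.
  have -> : #|(fun x => x != i)| = (m - 1)%N.
    by rewrite -[in RHS](card_ord m) subn1 -(cardC1 i); apply: eq_card.
  by rewrite mulrA [k * _]mulrC.
rewrite /has_mgwd.
rewrite (_ : [set w | forall t, N w (G t) = ((x t)%:R)%:E] =
             [set w | forall t, (if t == ord0 then comp_proc N i w A
                        else (\sum_(j < m | j != i) comp_proc N j w B)%E) = ((x t)%:R)%:E]); last first.
  by apply/seteqP; split => w /= H t; rewrite ?hX // -hX.
apply.
- move=> t; rewrite /G; case: (t == ord0); split.
  + exact: sgl_bor.
  + exact: sgl_bdd.
  + exact: (pred_bor B (fun x => x != i) mB).
  + exact: (pred_bdd B (fun x => x != i) bB).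
- move=> t1 t2 t12; rewrite /G.
  case: (boolP (t1 == ord0)) => h1; case: (boolP (t2 == ord0)) => h2.
  + by move: t12; rewrite (eqP h1) (eqP h2) eqxx.
  + apply/seteqP; split => p //= [[_ E1] [_ E2]]; by move: E2; rewrite E1 eqxx.
  + apply/seteqP; split => p //= [[_ E1] [_ E2]]; by move: E1; rewrite E2 eqxx.
  + exfalso; move: t12 h1 h2; case: t1 => [[|[|n1]] p1] //; case: t2 => [[|[|n2]] p2] //.
Qed.
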